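(* Let $T$ be a tree with at least two vertices. Then $$F(T)=\frac{1}{2}\sum_{v\in V(T)} F(T_v).$$
   Context: For a finite undirected graph $G=(V,E)$, a shelling of $G$ is a total ordering $\sigma(1),\ldots,\sigma(|E|)$ of $E$ such that for every $k$ the edges $\sigma(1),\ldots,\sigma(k)$ form a connected subgraph; $F(G)$ is the number of shellings of $G$. For a vertex $v$ of a tree $T$, $T_v$ denotes $T$ rooted at $v$, a shelling of $T_v$ is a shelling $\sigma$ of $T$ whose first edge $\sigma(1)$ is incident to $v$, and $F(T_v)$ is the number of shellings of $T_v$. *)

(* Defs.v *)
From mathcomp Require Import all_boot all_order all_algebra.
Set Implicit Arguments. Unset Strict Implicit. Unset Printing Implicit Defensive.

Section Graphs.
Variable (T : finType) (e : rel T).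

Definition simple_graph : Prop := symmetric e /\ irreflexive e.

Definition edges : {set {set T}} :=
  [set s : {set T} | [exists x, exists y, e x y && (s == [set x; y])]].

Definition graph_connected : Prop := forall x y : T, connect e x y.

Definition acyclic : Prop :=
  forall c : seq T, uniq c -> 3 <= size c -> ~~ cycle e c.

Definition is_tree : Prop := simple_graph /\ graph_connected /\ acyclic.

Definition edges_connected (S : seq {set T}) : bool :=
  [forall x, forall y,
     ((x \in \bigcup_(s <- S) s) && (y \in \bigcup_(s <- S) s)) ==>
     connect [rel a b | [set a; b] \in S] x y].

Definition is_shelling (s : seq {set T}) : bool :=
  perm_eq s (enum edges) &&
  [forall k : 'I_(size s).+1, (0 < k) ==> edges_connected (take k s)].

(* F(G): number of shellings (permutations of enum edges is duplicate-free
   and lists every ordering of the edges exactly once). *)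
Definition F : nat := count is_shelling (permutations (enum edges)).

(* F(T_v): shellings whose first edge is incident to v. *)
Definition F_root (v : T) : nat :=
  count (fun s => is_shelling s && (v \in head set0 s))
        (permutations (enum edges)).

End Graphs.

(* Main.v *)
Require Import Defs.
From mathcomp Require Import all_boot all_order all_algebra.
Import GRing.Theory.
Local Open Scope ring_scope.

Lemma edge_exists (T : finType) (e : rel T) :
  is_tree e -> (1 < #|T|)%N -> exists x y, e x y.
Proof.
move=> [_ [Hc _]] /card_gt1P [x [y [_ _ Hxy]]].
have /connectP [p Hp Hl] := Hc x y.
case: p Hp Hl => [|z p] /=; first by move=> _ Hl; rewrite Hl eqxx in Hxy.
by move=> /andP [Hxz _] _; exists x, z.
Qed.

Lemma sum_in_count (T : finType) (A : {set T}) (b : bool) :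
  (\sum_(v : T) (b && (v \in A)) = b * #|A|)%N.
Proof.
case: b => /=; last by rewrite mul0n big1.
rewrite mul1n -sum1_card [RHS]big_mkcond /=; apply: eq_bigr => v _.
by case: (v \in A).
Qed.

Lemma key (T : finType) (e : rel T) :
  is_tree e -> (1 < #|T|)%N ->
  (\sum_(v : T) F_root e v = 2 * F e)%N.
Proof.
move=> Ht H1; have [x [y Exy]] := @edge_exists T e Ht H1.
have Hirr : irreflexive e by case: Ht => [[]].
have Hin : [set x; y] \in edges e.
  by rewrite inE; apply/existsP; exists x; apply/existsP; exists y; rewrite Exy eqxx.
rewrite /F /F_root.
have : forall s, s \in permutations (enum (edges e)) -> perm_eq s (enum (edges e)).
  by move=> s; rewrite mem_permutations.
elim: (permutations _) => [|s P IH] HP.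
  by rewrite /= big1.
rewrite /= big_split /= IH; last by move=> t Ht'; apply: HP; rewrite inE Ht' orbT.
rewrite sum_in_count mulnDr; congr (_ + _)%N.
have Hs := HP s (mem_head _ _).
clear IH HP; case: s Hs => [|a s] Hs /=.
  have := perm_mem Hs ([set x; y]); rewrite mem_enum Hin in_nil => //.
have : a \in edges e by rewrite -mem_enum -(perm_mem Hs) mem_head.
rewrite inE => /existsP [u /existsP [w /andP [Euw /eqP ->]]].
rewrite cards2; case: (u =P w) => [Huw|_]; last by rewrite mulnC.
by rewrite Huw Hirr in Euw.
Qed.

Theorem proposition3p6 (T : finType) (e : rel T) :
  is_tree e -> (1 < #|T|)%N ->
  (F e)%:R = (1 / 2 : rat) * \sum_(v : T) ((F_root e v)%:R : rat).
Proof.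
move=> Ht H1; rewrite -natr_sum (@key T e) // natrM.
by rewrite mulrA mul1r mulVf // mul1r.
Qed.
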